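(* Let $R$ be a division ring with center $C$, let $\{I_{a,b}\}_{a,b\in\mathbb{Z}_{\ge0}}\subseteq R$, and let $\{p_k(x)\}_{k\ge0}\subseteq R[x]$, $\{q_k(y)\}_{k\ge0}\subseteq R[y]$ be biorthonormal with respect to $\{I_{a,b}\}$, with $p_k$ and $q_k$ of degree exactly $k$. Suppose there are polynomials $f(x)=\sum_{i=0}^n a_i x^i$ and $g(y)=\sum_{j=0}^m y^j b_j$ with $a_i,b_j\in C$, and elements $\alpha_r,\beta_s\in R$, such that $$\sum_{i=0}^n a_i I_{r+i,s}+\sum_{j=0}^m I_{r,s+j}b_j=\alpha_r\beta_s\quad\text{for all } r,s\ge 0.$$ Writing $p_k(x)=\sum_{i=0}^k c^{(k)}_i x^i$ and $q_k(y)=\sum_{i=0}^k y^i d^{(k)}_i$, set $\pi_k=\sum_{i=0}^k c^{(k)}_i\alpha_i$ and $\eta_k=\sum_{i=0}^k \beta_i d^{(k)}_i$, and assume all $\pi_k,\eta_k$ are nonzero. Then $p_k$ and $q_k$ satisfy $(n+m+2)$-term recurrence relations: for every $k\ge1$ there exist elements $A_{k,i},B_{k,i}\in R$ such that $$\big(\pi_k^{-1}p_k(x)-\pi_{k-1}^{-1}p_{k-1}(x)\big)f(x)=\sum_{i=k-1-m}^{k+n}A_{k,i}\,p_i(x),$$ $$g(y)\big(q_k(y)\eta_k^{-1}-q_{k-1}(y)\eta_{k-1}^{-1}\big)=\sum_{i=k-1-n}^{k+m}q_i(y)\,B_{k,i},$$ where terms with negative index are omitted.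
   Context: Elements of $R[x]$ are written $\sum_i a_i x^i$ and elements of $R[y]$ as $\sum_j y^j b_j$; $x$ and $y$ commute with elements of $C$. The pairing $\langle\cdot,\cdot\rangle:R[x]\times R[y]\to R$ determined by the bimoments is $\langle \sum_i a_i x^i,\sum_j y^j b_j\rangle=\sum_{i,j}a_iI_{i,j}b_j$. The sequences are biorthonormal if $\langle p_k,q_l\rangle=0$ for $k\neq l$ and $\langle p_k,q_k\rangle=1$ for all $k$. *)

(* Defs.v *)
From HB Require Import structures.
From mathcomp Require Import all_boot all_order all_algebra.
Set Implicit Arguments. Unset Strict Implicit. Unset Printing Implicit Defensive.
Import GRing.Theory.
Local Open Scope ring_scope.

Definition division_ring (R : unitRingType) : Prop :=
  forall x : R, x != 0 -> x \is a GRing.unit.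

Definition central (R : unitRingType) (c : R) : Prop :=
  forall z : R, c * z = z * c.

(* R[x] and R[y] are both modelled by {poly R}; the variable commutes with R.
   Pairing <sum a_i x^i, sum y^j b_j> = sum_{i,j} a_i I_{i,j} b_j. *)
Definition bipairing (R : unitRingType) (I : nat -> nat -> R)
  (p q : {poly R}) : R :=
  \sum_(i < size p) \sum_(j < size q) p`_i * I i j * q`_j.

Definition biorthonormal (R : unitRingType) (I : nat -> nat -> R)
  (p q : nat -> {poly R}) : Prop :=
  forall k l : nat, bipairing I (p k) (q l) = (k == l)%:R.

(* Main.v *)
Require Import Defs.
From HB Require Import structures.
From mathcomp Require Import all_boot all_order all_algebra.
From mathcomp Require Import zify.
Import GRing.Theory.
Local Open Scope ring_scope.
Set Implicit Arguments. Unset Strict Implicit.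

Lemma sum_coef_wide (R : unitRingType) (P : {poly R}) N (F : nat -> R -> R) :
  (forall r, F r 0 = 0) -> (size P <= N)%N ->
  \sum_(r < N) F r P`_r = \sum_(r < size P) F r P`_r.
Proof.
move=> F0 hN; rewrite -(subnKC hN) big_split_ord /=.
rewrite [X in _ + X]big1 ?addr0 // => i _.
by rewrite nth_default ?F0 // leq_addr.
Qed.

Lemma bip_wide (R : unitRingType) (I : nat -> nat -> R) (P Q : {poly R}) N M :
  (size P <= N)%N -> (size Q <= M)%N ->
  bipairing I P Q = \sum_(i < N) \sum_(j < M) P`_i * I i j * Q`_j.
Proof.
move=> hN hM; rewrite /bipairing.
rewrite (@sum_coef_wide R P N (fun i x => \sum_(j < M) x * I i j * Q`_j)) //; last first.
  by move=> r; rewrite big1 // => j _; rewrite !mul0r.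
apply: eq_bigr => i _.
by rewrite (@sum_coef_wide R Q M (fun j x => P`_i * I i j * x)) // => r; rewrite mulr0.
Qed.

Lemma bipDl (R : unitRingType) (I : nat -> nat -> R) (P P' Q : {poly R}) :
  bipairing I (P + P') Q = bipairing I P Q + bipairing I P' Q.
Proof.
have h1 : (size P <= maxn (size P) (size P'))%N by apply: leq_maxl.
have h2 : (size P' <= maxn (size P) (size P'))%N by apply: leq_maxr.
have h3 : (size (P + P')%R <= maxn (size P) (size P'))%N by apply: size_polyD.
rewrite (bip_wide I h1 (leqnn (size Q))) (bip_wide I h2 (leqnn (size Q))).
rewrite (bip_wide I h3 (leqnn (size Q))) -big_split; apply: eq_bigr => i _.
by rewrite -big_split; apply: eq_bigr => j _; rewrite coefD !mulrDl.
Qed.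

Lemma bip0l (R : unitRingType) (I : nat -> nat -> R) (Q : {poly R}) :
  bipairing I 0 Q = 0.
Proof. by rewrite /bipairing size_poly0 big_ord0. Qed.

Lemma bipZl (R : unitRingType) (I : nat -> nat -> R) c (P Q : {poly R}) :
  bipairing I (c *: P) Q = c * bipairing I P Q.
Proof.
rewrite (bip_wide I (size_scale_leq c P) (leqnn (size Q))) /bipairing mulr_sumr.
apply: eq_bigr => i _; rewrite mulr_sumr; apply: eq_bigr => j _.
by rewrite coefZ !mulrA.
Qed.

Lemma bipNl (R : unitRingType) (I : nat -> nat -> R) (P Q : {poly R}) :
  bipairing I (- P) Q = - bipairing I P Q.
Proof. by rewrite -scaleN1r bipZl mulN1r. Qed.

Lemma bipDr (R : unitRingType) (I : nat -> nat -> R) (P Q Q' : {poly R}) :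
  bipairing I P (Q + Q') = bipairing I P Q + bipairing I P Q'.
Proof.
have h1 : (size Q <= maxn (size Q) (size Q'))%N by apply: leq_maxl.
have h2 : (size Q' <= maxn (size Q) (size Q'))%N by apply: leq_maxr.
have h3 : (size (Q + Q')%R <= maxn (size Q) (size Q'))%N by apply: size_polyD.
rewrite (bip_wide I (leqnn (size P)) h1) (bip_wide I (leqnn (size P)) h2).
rewrite (bip_wide I (leqnn (size P)) h3) -big_split; apply: eq_bigr => i _.
by rewrite -big_split; apply: eq_bigr => j _; rewrite coefD !mulrDr.
Qed.

Lemma bip0r (R : unitRingType) (I : nat -> nat -> R) (P : {poly R}) :
  bipairing I P 0 = 0.
Proof. by rewrite /bipairing size_poly0; apply: big1 => i _; rewrite big_ord0. Qed.

Lemma size_MC (R : unitRingType) (Q : {poly R}) c : (size (Q * c%:P)%R <= size Q)%N.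
Proof. by apply/leq_sizeP => j hj; rewrite coefMC nth_default // mul0r. Qed.

Lemma bipMCr (R : unitRingType) (I : nat -> nat -> R) c (P Q : {poly R}) :
  bipairing I P (Q * c%:P) = bipairing I P Q * c.
Proof.
rewrite (bip_wide I (leqnn (size P)) (size_MC Q c)) /bipairing mulr_suml.
apply: eq_bigr => i _; rewrite mulr_suml; apply: eq_bigr => j _.
by rewrite coefMC !mulrA.
Qed.

Lemma bip_suml (R : unitRingType) (I : nat -> nat -> R) (Q : {poly R}) (T : Type)
  (r : seq T) (Pr : pred T) (F : T -> {poly R}) :
  bipairing I (\sum_(i <- r | Pr i) F i) Q = \sum_(i <- r | Pr i) bipairing I (F i) Q.
Proof.
apply: (big_morph (fun P => bipairing I P Q)); last exact: bip0l.
by move=> x y; apply: bipDl.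
Qed.

Lemma bip_sumr (R : unitRingType) (I : nat -> nat -> R) (P : {poly R}) (T : Type)
  (r : seq T) (Pr : pred T) (F : T -> {poly R}) :
  bipairing I P (\sum_(i <- r | Pr i) F i) = \sum_(i <- r | Pr i) bipairing I P (F i).
Proof.
apply: (big_morph (fun Q => bipairing I P Q)); last exact: bip0r.
by move=> x y; apply: bipDr.
Qed.

Lemma bip_mulX (R : unitRingType) (I : nat -> nat -> R) (P Q : {poly R}) i :
  bipairing I (P * 'X^i) Q =
  \sum_(r < size P) \sum_(s < size Q) P`_r * I (r + i)%N s * Q`_s.
Proof.
have h : (size (P * 'X^i)%R <= i + size P)%N.
  apply/leq_sizeP => j hj; rewrite coefMXn; case: ifP => // /negbT.
  by rewrite -leqNgt => hij; rewrite nth_default // -(leq_add2l i) subnKC.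
rewrite (bip_wide I h (leqnn _)) big_split_ord /= big1 ?add0r; last first.
  by move=> r _; apply: big1 => s _; rewrite coefMXn ltn_ord !mul0r.
apply: eq_bigr => r _; apply: eq_bigr => s _.
by rewrite coefMXn ltnNge leq_addr /= addKn addnC.
Qed.

Lemma bip_Xmul (R : unitRingType) (I : nat -> nat -> R) (P Q : {poly R}) j :
  bipairing I P ('X^j * Q) =
  \sum_(r < size P) \sum_(s < size Q) P`_r * I r (s + j)%N * Q`_s.
Proof.
have h : (size ('X^j * Q)%R <= j + size Q)%N.
  apply/leq_sizeP => t ht; rewrite coefXnM; case: ifP => // /negbT.
  by rewrite -leqNgt => hij; rewrite nth_default // -(leq_add2l j) subnKC.
rewrite (bip_wide I (leqnn _) h); apply: eq_bigr => r _.
rewrite big_split_ord /= big1 ?add0r; last first.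
  by move=> s _; rewrite coefXnM ltn_ord !mulr0.
by apply: eq_bigr => s _; rewrite coefXnM ltnNge leq_addr /= addKn addnC.
Qed.
Lemma polyC_central (R : unitRingType) (c : R) (Z : {poly R}) :
  central c -> c%:P * Z = Z * c%:P.
Proof. by move=> hc; apply/polyP => t; rewrite coefCM coefMC hc. Qed.

Lemma key_id (R : unitRingType) (I : nat -> nat -> R) n m (a b alpha beta : nat -> R) :
  (forall i, central (a i)) -> (forall j, central (b j)) ->
  (forall r s : nat,
     \sum_(i < n.+1) a i * I (r + i)%N s + \sum_(j < m.+1) I r (s + j)%N * b j
     = alpha r * beta s) ->
  forall P Q : {poly R},
  bipairing I (P * \poly_(i < n.+1) a i) Q + bipairing I P (\poly_(j < m.+1) b j * Q)
  = (\sum_(r < size P) P`_r * alpha r) * (\sum_(s < size Q) beta s * Q`_s).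
Proof.
move=> ha hb hI P Q.
have -> : P * \poly_(i < n.+1) a i = \sum_(i < n.+1) a i *: (P * 'X^i).
  rewrite poly_def mulr_sumr; apply: eq_bigr => i _.
  by rewrite -mul_polyC mulrA -polyC_central // mul_polyC scalerAl.
have -> : \poly_(j < m.+1) b j * Q = \sum_(j < m.+1) ('X^j * Q) * (b j)%:P.
  rewrite poly_def mulr_suml; apply: eq_bigr => j _.
  by rewrite -mul_polyC -mulrA polyC_central.
rewrite bip_suml bip_sumr.
under eq_bigr do rewrite bipZl bip_mulX.
under [X in _ + X]eq_bigr do rewrite bipMCr bip_Xmul.
rewrite mulr_suml.
have E : forall r : 'I_(size P), forall s : 'I_(size Q),
  P`_r * alpha r * (beta s * Q`_s) =
  \sum_(i < n.+1) a i * (P`_r * I (r + i)%N s * Q`_s)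
  + \sum_(j < m.+1) P`_r * I r (s + j)%N * Q`_s * b j.
  move=> r s; rewrite mulrA -(mulrA _ (alpha r)) -hI mulrDr mulrDl.
  congr (_ + _).
    rewrite mulr_sumr mulr_suml; apply: eq_bigr => i _.
    by rewrite !mulrA ha.
  rewrite mulr_sumr mulr_suml; apply: eq_bigr => j _.
  by rewrite -!mulrA hb.
under [RHS]eq_bigr do rewrite mulr_sumr.
under [RHS]eq_bigr do under eq_bigr do rewrite E.
under [RHS]eq_bigr do rewrite big_split.
rewrite big_split /=; congr (_ + _).
  under eq_bigr do rewrite mulr_sumr.
  under eq_bigr do under eq_bigr do rewrite mulr_sumr.
  rewrite exchange_big; apply: eq_bigr => r _.
  by rewrite exchange_big.
under eq_bigr do rewrite mulr_suml.
under eq_bigr do under eq_bigr do rewrite mulr_suml.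
rewrite exchange_big; apply: eq_bigr => r _.
by rewrite exchange_big.
Qed.

Lemma span_l (R : unitRingType) (p : nat -> {poly R}) :
  division_ring R -> (forall k, size (p k) = k.+1) ->
  forall N (F : {poly R}), (size F <= N)%N ->
  exists A : nat -> R, F = \sum_(i < N) A i *: p i.
Proof.
move=> hdiv hp; elim=> [|N IH] F hF.
  exists (fun _ => 0); rewrite big_ord0; apply/eqP.
  by rewrite -size_poly_eq0 -leqn0.
have hu : lead_coef (p N) \is a GRing.unit.
  by apply: hdiv; rewrite lead_coef_eq0 -size_poly_eq0 hp.
have hl : (p N)`_N = lead_coef (p N) by rewrite lead_coefE hp.
set c := F`_N / lead_coef (p N).
have hF' : (size (F - c *: p N)%R <= N)%N.
  apply/leq_sizeP => j hj; rewrite coefB coefZ.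
  move: hj; rewrite leq_eqVlt => /orP [/eqP <- | hj].
    by rewrite hl /c divrK // subrr.
  rewrite !nth_default ?hp ?mulr0 ?subr0 //.
  exact: leq_trans hF hj.
have [A' EA'] := IH _ hF'.
exists (fun i => if i == N then c else A' i).
rewrite big_ord_recr /= eqxx -[F](subrK (c *: p N)) EA'.
by congr (_ + _); apply: eq_bigr => i _; rewrite (ltn_eqF (ltn_ord i)).
Qed.

Lemma span_r (R : unitRingType) (q : nat -> {poly R}) :
  division_ring R -> (forall k, size (q k) = k.+1) ->
  forall N (G : {poly R}), (size G <= N)%N ->
  exists B : nat -> R, G = \sum_(i < N) q i * (B i)%:P.
Proof.
move=> hdiv hq; elim=> [|N IH] G hG.
  exists (fun _ => 0); rewrite big_ord0; apply/eqP.
  by rewrite -size_poly_eq0 -leqn0.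
have hu : lead_coef (q N) \is a GRing.unit.
  by apply: hdiv; rewrite lead_coef_eq0 -size_poly_eq0 hq.
have hl : (q N)`_N = lead_coef (q N) by rewrite lead_coefE hq.
set c := (lead_coef (q N))^-1 * G`_N.
have hG' : (size (G - q N * c%:P)%R <= N)%N.
  apply/leq_sizeP => j hj; rewrite coefB coefMC.
  move: hj; rewrite leq_eqVlt => /orP [/eqP <- | hj].
    by rewrite hl /c mulrA divrr // mul1r subrr.
  rewrite !nth_default ?hq ?mul0r ?subr0 //.
  exact: leq_trans hG hj.
have [B' EB'] := IH _ hG'.
exists (fun i => if i == N then c else B' i).
rewrite big_ord_recr /= eqxx -[G](subrK (q N * c%:P)) EB'.
by congr (_ + _); apply: eq_bigr => i _; rewrite (ltn_eqF (ltn_ord i)).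
Qed.

Lemma extract_l (R : unitRingType) (I : nat -> nat -> R) (p q : nat -> {poly R})
  (A : nat -> R) N j :
  biorthonormal I p q -> (j < N)%N ->
  bipairing I (\sum_(i < N) A i *: p i) (q j) = A j.
Proof.
move=> hbi hj; rewrite bip_suml.
rewrite (bigD1 (Ordinal hj)) //= bipZl hbi eqxx mulr1 big1 ?addr0 // => i hi.
rewrite bipZl hbi.
have -> : (nat_of_ord i == j) = false.
  by apply/negbTE; apply: contra hi => /eqP e; apply/eqP; apply: val_inj.
by rewrite mulr0.
Qed.

Lemma extract_r (R : unitRingType) (I : nat -> nat -> R) (p q : nat -> {poly R})
  (B : nat -> R) N j :
  biorthonormal I p q -> (j < N)%N ->
  bipairing I (p j) (\sum_(i < N) q i * (B i)%:P) = B j.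
Proof.
move=> hbi hj; rewrite bip_sumr.
rewrite (bigD1 (Ordinal hj)) //= bipMCr hbi eqxx mul1r big1 ?addr0 // => i hi.
rewrite bipMCr hbi.
have -> : (j == nat_of_ord i) = false.
  by apply/negbTE; apply: contra hi => /eqP e; apply/eqP; apply: val_inj.
by rewrite mul0r.
Qed.

Lemma orth_l (R : unitRingType) (I : nat -> nat -> R) (p q : nat -> {poly R}) k
  (Q : {poly R}) :
  division_ring R -> (forall k, size (q k) = k.+1) ->
  biorthonormal I p q -> (size Q <= k)%N -> bipairing I (p k) Q = 0.
Proof.
move=> hdiv hq hbi hQ; have [B ->] := span_r hdiv hq hQ.
rewrite bip_sumr big1 // => i _.
by rewrite bipMCr hbi (gtn_eqF (ltn_ord i)) mul0r.
Qed.

Lemma orth_r (R : unitRingType) (I : nat -> nat -> R) (p q : nat -> {poly R}) k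
  (P : {poly R}) :
  division_ring R -> (forall k, size (p k) = k.+1) ->
  biorthonormal I p q -> (size P <= k)%N -> bipairing I P (q k) = 0.
Proof.
move=> hdiv hp hbi hP; have [A ->] := span_l hdiv hp hP.
rewrite bip_suml big1 // => i _.
by rewrite bipZl hbi (ltn_eqF (ltn_ord i)) mulr0.
Qed.

Lemma bipNr (R : unitRingType) (I : nat -> nat -> R) (P Q : {poly R}) :
  bipairing I P (- Q) = - bipairing I P Q.
Proof. by rewrite -mulrN1 -polyCN bipMCr mulrN1. Qed.

Theorem mainTheorem3 (R : unitRingType) (I : nat -> nat -> R)
  (p q : nat -> {poly R}) (n m : nat) (a b : nat -> R) (alpha beta : nat -> R) :
  division_ring R ->
  biorthonormal I p q ->
  (forall k, size (p k) = k.+1) ->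
  (forall k, size (q k) = k.+1) ->
  (forall i, central (a i)) ->
  (forall j, central (b j)) ->
  (forall r s : nat,
     \sum_(i < n.+1) a i * I (r + i)%N s + \sum_(j < m.+1) I r (s + j)%N * b j
     = alpha r * beta s) ->
  let f : {poly R} := \poly_(i < n.+1) a i in
  let g : {poly R} := \poly_(j < m.+1) b j in
  let pi := fun k : nat => \sum_(i < k.+1) (p k)`_i * alpha i in
  let eta := fun k : nat => \sum_(i < k.+1) beta i * (q k)`_i in
  (forall k, pi k != 0) ->
  (forall k, eta k != 0) ->
  forall k : nat, (1 <= k)%N ->
  exists A B : nat -> R,
    ((pi k)^-1 *: p k - (pi k.-1)^-1 *: p k.-1) * f
      = \sum_(k.-1 - m <= i < k + n + 1) A i *: p i
    /\
    g * (q k * (eta k)^-1%:P - q k.-1 * (eta k.-1)^-1%:P)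
      = \sum_(k.-1 - n <= i < k + m + 1) q i * (B i)%:P.
Proof.
move=> hdiv hbi hp hq ha hb hI f g pi eta hpi heta [//|k] _ /=.
have key := key_id ha hb hI.
have hsf : (size f <= n.+1)%N by apply: size_poly.
have hsg : (size g <= m.+1)%N by apply: size_poly.
set P := (pi k.+1)^-1 *: p k.+1 - (pi k)^-1 *: p k.
set Q := q k.+1 * (eta k.+1)^-1%:P - q k * (eta k)^-1%:P.
have hsP : (size P <= k.+2)%N.
  apply/leq_sizeP => j hj; rewrite coefB !coefZ !nth_default ?hp ?mulr0 ?subr0 //.
  exact: ltnW.
have hsQ : (size Q <= k.+2)%N.
  apply/leq_sizeP => j hj; rewrite coefB !coefMC !nth_default ?hq ?mul0r ?subr0 //.
  exact: ltnW.
have piP : \sum_(r < size P) P`_r * alpha r = 0.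
  rewrite -(@sum_coef_wide R P k.+2 (fun r x => x * alpha r)) //; last by move=> r; rewrite mul0r.
  under eq_bigr do rewrite coefB !coefZ mulrBl -!mulrA.
  rewrite sumrB -!mulr_sumr.
  rewrite (@sum_coef_wide R (p k) k.+2 (fun r x => x * alpha r)) ?hp //; last by move=> r; rewrite mul0r.
  rewrite -/(pi k.+1) -/(pi k) !mulVr ?subrr //; exact: hdiv.
have etaQ : \sum_(s < size Q) beta s * Q`_s = 0.
  rewrite -(@sum_coef_wide R Q k.+2 (fun r x => beta r * x)) //; last by move=> r; rewrite mulr0.
  under eq_bigr do rewrite coefB !coefMC mulrBr !mulrA.
  rewrite sumrB -!mulr_suml.
  rewrite (@sum_coef_wide R (q k) k.+2 (fun r x => beta r * x)) ?hq //; last by move=> r; rewrite mulr0.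
  rewrite -/(eta k.+1) -/(eta k) !divrr ?subrr //; exact: hdiv.
have hsPf : (size (P * f)%R <= k.+1 + n + 1)%N.
  apply: leq_trans (size_polyMleq P f) _.
  have := leq_add hsP hsf; lia.
have hsgQ : (size (g * Q)%R <= k.+1 + m + 1)%N.
  apply: leq_trans (size_polyMleq g Q) _.
  have := leq_add hsg hsQ; lia.
have [A EA] := span_l hdiv hp hsPf.
have [B EB] := span_r hdiv hq hsgQ.
have A0 : forall j, (j < k - m)%N -> A j = 0.
  move=> j hj.
  have hjN : (j < k.+1 + n + 1)%N by lia.
  rewrite -(@extract_l R I p q A _ j hbi hjN) -EA.
  have := key P (q j); rewrite piP mul0r => /eqP; rewrite addr_eq0 => /eqP ->.
  rewrite /P bipDl bipNl !bipZl !(@orth_l R I p q _ _ hdiv hq hbi) ?mulr0 ?oppr0 ?addr0 //; try by rewrite oppr0.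
  1,2: apply: leq_trans (size_polyMleq _ _) _; rewrite hq; have := size_poly m.+1 b; lia.
have B0 : forall j, (j < k - n)%N -> B j = 0.
  move=> j hj.
  have hjN : (j < k.+1 + m + 1)%N by lia.
  rewrite -(@extract_r R I p q B _ j hbi hjN) -EB.
  have := key (p j) Q; rewrite etaQ mulr0 addrC => /eqP; rewrite addr_eq0 => /eqP ->.
  rewrite /Q bipDr bipNr !bipMCr !(@orth_r R I p q _ _ hdiv hp hbi) ?mul0r ?oppr0 ?addr0 //; try by rewrite oppr0.
  1,2: apply: leq_trans (size_polyMleq _ _) _; rewrite hp; have := size_poly n.+1 a; lia.
exists A, B; split.
  rewrite EA -(big_mkord (fun _ => true) (fun i => A i *: p i)) (@big_cat_nat _ _ _ (k - m)) //=; last by lia.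
  rewrite big_nat_cond big1 ?add0r // => i /andP [/andP [_ hi] _].
  by rewrite A0 // scale0r.
rewrite EB -(big_mkord (fun _ => true) (fun i => q i * (B i)%:P)) (@big_cat_nat _ _ _ (k - n)) //=; last by lia.
rewrite big_nat_cond big1 ?add0r // => i /andP [/andP [_ hi] _].
by rewrite B0 // mulr0.
Qed.
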